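(* Let $|\nu|\le1$, $T>0$, $\gamma\in[0,1/4)$, and let $q:\mathbb{R}\to[0,\infty)$ satisfy $q(k)\le C_q\min\{1,k^{-2}\}$ for all $k$. Then there is $C>0$ such that for all $\varepsilon\in(0,1]$ \[ \sup_{S\in[0,T]}\int_{\mathbb{R}}q(k)|f(S,k)|^2(|k|^{2\gamma}+1)\,dk\le C(\varepsilon^2+\varepsilon^{1/2}). \]
   Context: $f(\tau,k)=e^{\tau\nu}\big[\chi_{(-1/\varepsilon,\infty)}(k)e^{-\tau(2+k\varepsilon)^2k^2}-e^{-4\tau k^2}\big]$ for $\tau\in[0,T]$, $k\in\mathbb{R}$. *)

(* Defs.v *)
From Stdlib Require Import Reals Lra.
Open Scope R_scope.

(* |x|^y with the convention 0^0 = 1 and 0^y = 0 for y > 0 (Rpower needs x > 0). *)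
Definition rpow (x y : R) : R :=
  if Req_EM_T x 0 then (if Req_EM_T y 0 then 1 else 0) else Rpower x y.

Definition chi_gt (a k : R) : R := if Rlt_dec a k then 1 else 0.

Definition f_fn (nu eps tau k : R) : R :=
  exp (tau * nu) *
  (chi_gt (- / eps) k * exp (- tau * (2 + k * eps) ^ 2 * k ^ 2)
   - exp (- 4 * tau * k ^ 2)).

(* "int_R g <= M" for a nonnegative function g, in the sense of the upper
   (Darboux) integral: on every compact interval [a,b], g is dominated by
   step functions whose integral is at most M + delta for every delta > 0.
   This upper bound implies the corresponding bound on the Lebesgue integral
   whenever g is measurable. *)
Definition integral_R_le (g : R -> R) (M : R) : Prop :=
  forall a b : R, a <= b -> forall delta : R, 0 < delta ->
    exists phi : StepFun a b,
      (forall x, a <= x <= b -> g x <= phi x) /\ RiemannInt_SF phi <= M + delta.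

(* Main.v *)
Require Import Defs.
From Stdlib Require Import Reals.
From Stdlib Require Import Lra Lia.
From Coquelicot Require Import Coquelicot.
Open Scope R_scope.
Lemma upper_step (f : R -> R) (a b M : R) (pr : Riemann_integrable f a b) :
  a <= b -> RiemannInt pr <= M -> forall delta, 0 < delta ->
  exists phi : StepFun a b,
    (forall x, a <= x <= b -> f x <= phi x) /\ RiemannInt_SF phi <= M + delta.
Proof.
intros hab hM delta hd.
unfold RiemannInt in hM.
destruct (RiemannInt_exists pr RinvN RinvN_cv) as [l Hl].
assert (hd2 : 0 < delta/2) by lra.
destruct (Hl _ hd2) as [N1 HN1].
assert (HR := RinvN_cv); unfold Un_cv in HR; destruct (HR (delta/2) hd2) as [N2 HN2].
set (N := max N1 N2).
destruct (phi_sequence_prop RinvN pr N) as [psi [Hpsi Ipsi]].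
set (phi := phi_sequence RinvN pr N) in *.
exists (mkStepFun (StepFun_P28 1 phi psi)).
split.
- intros x hx. simpl. rewrite Rmin_left in Hpsi by lra. rewrite Rmax_right in Hpsi by lra.
  specialize (Hpsi x hx). pose proof (Rle_abs (f x - phi x)). lra.
- rewrite StepFun_P30.
  assert (A1 : (N >= N1)%nat) by (unfold N; lia).
  assert (A2 : (N >= N2)%nat) by (unfold N; lia).
  specialize (HN1 N A1). specialize (HN2 N A2).
  unfold R_dist in *. rewrite Rminus_0_r in HN2.
  rewrite Rabs_pos_eq in HN2 by (left; apply cond_pos).
  pose proof (Rle_abs (RiemannInt_SF psi)).
  pose proof (Rle_abs (RiemannInt_SF phi - l)). fold phi in HN1. lra.
Qed.
Lemma exp_le_exp (x y : R) : x <= y -> exp x <= exp y.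
Proof. intros [h|h]; [left; apply exp_increasing; auto | right; rewrite h; auto]. Qed.

Lemma expdiff (a b : R) : 0 <= a -> 0 <= b ->
  Rabs (exp (-a) - exp (-b)) <= exp (- Rmin a b) * Rabs (a - b).
Proof.
intros ha hb.
assert (key : forall x y, x <= y -> Rabs (exp (-x) - exp (-y)) <= exp (-x) * (y - x)).
{ intros x y hxy.
  replace (exp (-y)) with (exp (-x) * exp (-(y-x))) by (rewrite <- exp_plus; f_equal; ring).
  pose proof (exp_ineq1_le (-(y-x))).
  assert (exp (-(y-x)) <= 1) by (rewrite <- exp_0; apply exp_le_exp; lra).
  pose proof (exp_pos (-x)).
  rewrite Rabs_pos_eq; nra. }
destruct (Rle_or_lt a b) as [h|h].
- rewrite Rmin_left by lra. rewrite (Rabs_minus_sym a b), (Rabs_pos_eq (b-a)) by lra. apply key; lra.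
- rewrite Rmin_right by lra. rewrite (Rabs_pos_eq (a-b)) by lra.
  rewrite Rabs_minus_sym. apply key; lra.
Qed.

Lemma xexp (x : R) : x * exp (-x) <= 1.
Proof.
pose proof (exp_ineq1_le x). pose proof (exp_pos (-x)).
assert (exp x * exp (-x) = 1) by (rewrite <- exp_plus; replace (x + -x) with 0 by ring; apply exp_0).
nra.
Qed.

Lemma D_small (S e k : R) : 0 <= S -> 0 < e -> e * Rabs k < 1 ->
  Rabs (chi_gt (- / e) k * exp (- S * (2 + k * e) ^ 2 * k ^ 2) - exp (- 4 * S * k ^ 2)) <= 5 * (e * Rabs k).
Proof.
intros hS he hk.
unfold chi_gt. destruct (Rlt_dec (- / e) k) as [_|hn].
2:{ exfalso. apply hn. assert (Rabs k < / e).
    { apply Rmult_lt_reg_l with e; auto. rewrite Rinv_r; lra. }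
    pose proof (Rle_abs (-k)). rewrite Rabs_Ropp in *. lra. }
rewrite Rmult_1_l.
assert (hke : Rabs (k*e) < 1) by (rewrite Rabs_mult, (Rabs_pos_eq e) by lra; lra).
assert (hke2 : -1 < k*e < 1) by (pose proof (Rle_abs (k*e)); pose proof (Rle_abs (-(k*e))); rewrite Rabs_Ropp in *; lra).
set (a := S * (2 + k * e) ^ 2 * k ^ 2). set (b := 4 * S * k ^ 2).
replace (- S * (2 + k * e) ^ 2 * k ^ 2) with (-a) by (unfold a; ring).
replace (- 4 * S * k ^ 2) with (-b) by (unfold b; ring).
assert (hk2 : 0 <= k^2) by nra.
assert (hSk : 0 <= S * k^2) by nra.
assert (ha : S * k^2 <= a). { unfold a. assert (1 <= (2+k*e)^2) by nra. nra. }
assert (hb : S * k^2 <= b) by (unfold b; nra).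
eapply Rle_trans. apply expdiff; lra.
assert (Hm : exp (- Rmin a b) <= exp (-(S*k^2))).
{ apply exp_le_exp. apply Ropp_le_contravar. apply Rmin_glb; lra. }
assert (Hab : Rabs (a - b) <= S * k^2 * (5 * (e * Rabs k))).
{ replace (a - b) with (S*k^2 * ((k*e) * (4 + k*e))) by (unfold a,b; ring).
  rewrite Rabs_mult, (Rabs_pos_eq (S*k^2)) by lra. rewrite Rabs_mult.
  apply Rmult_le_compat_l; auto.
  rewrite (Rabs_pos_eq (4 + k*e)) by lra.
  replace (Rabs (k*e)) with (e * Rabs k) by (rewrite Rabs_mult, (Rabs_pos_eq e) by lra; ring).
  assert (0 <= e * Rabs k) by (pose proof (Rabs_pos k); nra). nra. }
pose proof (xexp (S*k^2)). pose proof (exp_pos (- Rmin a b)). pose proof (Rabs_pos (a-b)).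
pose proof (exp_pos (-(S*k^2))).
assert (0 <= e * Rabs k) by (pose proof (Rabs_pos k); nra).
apply Rle_trans with (exp (- (S * k ^ 2)) * (S * k ^ 2 * (5 * (e * Rabs k)))).
- apply Rmult_le_compat; auto; lra.
- nra.
Qed.

Lemma D_one (S e k : R) : 0 <= S ->
  Rabs (chi_gt (- / e) k * exp (- S * (2 + k * e) ^ 2 * k ^ 2) - exp (- 4 * S * k ^ 2)) <= 1.
Proof.
intros hS.
assert (E1 : 0 < exp (- S * (2 + k * e) ^ 2 * k ^ 2) <= 1).
{ split. apply exp_pos. rewrite <- exp_0. apply exp_le_exp.
  assert (0 <= (2 + k*e)^2 * k^2) by (apply Rmult_le_pos; apply pow2_ge_0). nra. }
assert (E2 : 0 < exp (- 4 * S * k ^ 2) <= 1).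
{ split. apply exp_pos. rewrite <- exp_0. apply exp_le_exp. pose proof (pow2_ge_0 k). nra. }
unfold chi_gt; destruct (Rlt_dec (- / e) k); apply Rabs_le; lra.
Qed.

Lemma f_sq (nu e S T k : R) : Rabs nu <= 1 -> 0 <= S <= T ->
  (f_fn nu e S k)^2 <= exp (2*T) *
   (chi_gt (- / e) k * exp (- S * (2 + k * e) ^ 2 * k ^ 2) - exp (- 4 * S * k ^ 2))^2.
Proof.
intros hnu hS. unfold f_fn.
set (D := chi_gt (- / e) k * exp (- S * (2 + k * e) ^ 2 * k ^ 2) - exp (- 4 * S * k ^ 2)).
assert (exp (S*nu) <= exp T).
{ apply exp_le_exp. pose proof (Rle_abs nu). pose proof (Rle_abs (-nu)). rewrite Rabs_Ropp in *. nra. }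
assert (exp (2*T) = exp T * exp T) by (rewrite <- exp_plus; f_equal; ring).
pose proof (exp_pos (S*nu)). pose proof (pow2_ge_0 D).
rewrite H0. replace ((exp (S*nu) * D)^2) with (exp (S*nu)^2 * D^2) by ring.
apply Rmult_le_compat_r; auto. nra.
Qed.

Lemma weight (gamma k : R) : 0 <= gamma < / 4 ->
  rpow (Rabs k) (2 * gamma) + 1 <= 2 + sqrt (Rabs k).
Proof.
intros hg. pose proof (sqrt_pos (Rabs k)).
unfold rpow. destruct (Req_EM_T (Rabs k) 0) as [h|h].
- destruct (Req_EM_T (2*gamma) 0); lra.
- assert (hk : 0 < Rabs k) by (pose proof (Rabs_pos k); lra).
  unfold Rpower. destruct (Rle_or_lt (Rabs k) 1) as [h1|h1].
  + assert (ln (Rabs k) <= 0) by (destruct h1 as [h1|h1]; [left; rewrite <- ln_1; apply ln_increasing; lra | rewrite h1, ln_1; lra]).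
    assert (exp (2*gamma * ln (Rabs k)) <= 1) by (rewrite <- exp_0; apply exp_le_exp; nra). lra.
  + assert (0 < ln (Rabs k)) by (rewrite <- ln_1; apply ln_increasing; lra).
    rewrite <- (Rpower_sqrt (Rabs k)) by lra. unfold Rpower.
    assert (exp (2*gamma * ln (Rabs k)) <= exp (/2 * ln (Rabs k))) by (apply exp_le_exp; nra). lra.
Qed.
Definition P (e k : R) := 4*e^2*sqrt e*Rabs k/((1+(e*k)^2)*sqrt(sqrt(1+(e*k)^2))).
Definition U (e K k : R) := K * (4*e^2/(1+(e*k)^2) + 2*e*sqrt e/(1+(e*k)^2) + P e k).

Lemma P_nonneg (e k : R) : 0 < e -> 0 <= P e k.
Proof.
intros he. unfold P.
assert (0 < sqrt (sqrt (1 + (e*k)^2))) by (apply sqrt_lt_R0, sqrt_lt_R0; nra).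
apply Rmult_le_pos. pose proof (sqrt_pos e); pose proof (Rabs_pos k).
apply Rmult_le_pos; [|lra]. apply Rmult_le_pos; [|lra]. nra.
left. apply Rinv_0_lt_compat. apply Rmult_lt_0_compat; nra.
Qed.

Lemma L1 (e k : R) : 0 < e -> 1 <= e * Rabs k -> 2 / k^2 <= 4*e^2/(1+(e*k)^2).
Proof.
intros he hk.
assert (hk2 : 1 <= e^2 * k^2).
{ rewrite <- (pow2_abs k). replace (e^2 * Rabs k ^2) with ((e * Rabs k)^2) by ring. set (x := e * Rabs k) in *. nra. }
assert (0 < k^2) by nra.
unfold Rdiv. apply Rle_trans with (4*e^2 * / (2 * (e^2 * k^2))).
- right. field. split; nra.
- apply Rmult_le_compat_l. nra. apply Rinv_le_contravar; nra.
Qed.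

Lemma L2 (e k : R) : 0 < e -> 1 <= e * Rabs k -> sqrt (Rabs k) / k^2 <= P e k.
Proof.
intros he hk. unfold P.
set (r := sqrt (Rabs k)). set (s := sqrt e).
assert (hr : r * r = Rabs k) by (apply sqrt_sqrt, Rabs_pos).
assert (hs : s * s = e) by (apply sqrt_sqrt; lra).
assert (r0 : 0 <= r) by apply sqrt_pos. assert (s0 : 0 <= s) by apply sqrt_pos.
assert (hk2 : k^2 = r^4) by (rewrite <- (pow2_abs k), <- hr; ring).
assert (hsr : 1 <= s^2 * r^2) by (replace (s^2*r^2) with (e * Rabs k) by (rewrite <- hr, <- hs; ring); lra).
assert (hsr0 : 0 < s * r).
{ assert (hh : 0 <= s*r) by (apply Rmult_le_pos; auto). destruct hh as [hh|hh]; auto.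
  replace (s^2*r^2) with ((s*r)^2) in hsr by ring. rewrite <- hh in hsr. lra. }
set (w := 1 + (e*k)^2).
assert (hw : w = 1 + s^4 * r^4) by (unfold w; rewrite <- hs; replace ((s*s*k)^2) with (s^4 * k^2) by ring; rewrite hk2; ring).
set (ss := sqrt (sqrt w)).
assert (w0 : 0 < w) by nra.
assert (ss0 : 0 < ss) by (apply sqrt_lt_R0, sqrt_lt_R0; lra).
assert (hss : ss^4 = w).
{ unfold ss. replace (sqrt (sqrt w) ^4) with ((sqrt (sqrt w) * sqrt (sqrt w)) * (sqrt (sqrt w) * sqrt (sqrt w))) by ring.
  rewrite sqrt_sqrt by (apply sqrt_pos). apply sqrt_sqrt; lra. }
assert (hb : ss <= 1.2 * (s * r)).
{ destruct (Rle_or_lt ss (1.2 * (s*r))) as [h|h]; auto. exfalso.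
  assert (h2 : (1.2*(s*r))^2 < ss^2) by nra.
  assert ((1.2*(s*r))^4 < ss^4) by (replace ((1.2*(s*r))^4) with (((1.2*(s*r))^2)^2) by ring; replace (ss^4) with ((ss^2)^2) by ring; nra).
  rewrite hss, hw in H. nra. }
replace (e^2) with (s^4) by (rewrite <- hs; ring).
rewrite <- hr, hk2. fold w ss.
assert (0 < r) by nra.
unfold Rdiv. apply Rmult_le_reg_r with (r^4 * (w * ss)).
{ apply Rmult_lt_0_compat. nra. apply Rmult_lt_0_compat; lra. }
replace (r * / r ^ 4 * (r ^ 4 * (w * ss))) with (r * (w*ss)) by (field; lra).
replace (4 * s ^ 4 * s * (r * r) * / (w * ss) * (r ^ 4 * (w * ss))) with (4 * s^5 * r^6) by (field; lra).
rewrite hw.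
assert (1 + s^4*r^4 <= 2 * (s^4 * r^4)) by nra.
assert (r * ((1 + s ^ 4 * r ^ 4) * ss) <= r * ((2 * (s^4 * r^4)) * (1.2 * (s * r)))).
{ apply Rmult_le_compat_l; auto. apply Rmult_le_compat; nra. }
nra.
Qed.

Lemma pointwise (nu T gamma Cq : R) (q : R -> R)
  (hnu : Rabs nu <= 1) (hgamma : 0 <= gamma < / 4)
  (hq_nonneg : forall k, 0 <= q k)
  (hq_bound : forall k, q k <= Cq /\ q k * k ^ 2 <= Cq)
  (e S k : R) : 0 < e <= 1 -> 0 <= S <= T ->
  q k * (f_fn nu e S k) ^ 2 * (rpow (Rabs k) (2 * gamma) + 1)
  <= U e (25 * exp (2*T) * (Cq + 1)) k.
Proof.
intros he hS.
assert (Cq0 : 0 <= Cq) by (pose proof (hq_nonneg 0); pose proof (hq_bound 0); lra).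
destruct (hq_bound k) as [hq1 hq2]. pose proof (hq_nonneg k) as hq0.
set (E := exp (2*T)). assert (E0 : 0 < E) by apply exp_pos.
set (K := 25 * E * (Cq + 1)).
set (D := chi_gt (- / e) k * exp (- S * (2 + k * e) ^ 2 * k ^ 2) - exp (- 4 * S * k ^ 2)).
assert (HF : (f_fn nu e S k)^2 <= E * D^2) by (apply f_sq; auto).
assert (HW : rpow (Rabs k) (2 * gamma) + 1 <= 2 + sqrt (Rabs k)) by (apply weight; auto).
assert (W0 : 0 <= rpow (Rabs k) (2 * gamma) + 1).
{ unfold rpow. destruct (Req_EM_T (Rabs k) 0); [destruct (Req_EM_T (2*gamma) 0)|]; try lra.
  unfold Rpower. pose proof (exp_pos (2 * gamma * ln (Rabs k))). lra. }
assert (F0 : 0 <= (f_fn nu e S k)^2) by apply pow2_ge_0.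
set (W := rpow (Rabs k) (2 * gamma) + 1) in *.
set (F := (f_fn nu e S k)^2) in *.
set (r := sqrt (Rabs k)) in *. assert (r0 : 0 <= r) by apply sqrt_pos.
pose proof (P_nonneg e k (proj1 he)) as HP.
assert (hw1 : 1 <= 1 + (e*k)^2) by nra.
set (w := 1 + (e*k)^2) in *.
assert (Hq : q k * F * W <= q k * (E * D^2) * (2 + r)).
{ apply Rmult_le_compat; auto. apply Rmult_le_pos; auto. apply Rmult_le_compat_l; auto. }
unfold U. fold w.
assert (se : 0 <= sqrt e) by apply sqrt_pos.
assert (T1 : 0 <= 4 * e^2 / w) by (unfold Rdiv; apply Rmult_le_pos; [nra | left; apply Rinv_0_lt_compat; lra]).
assert (T2 : 0 <= 2 * e * sqrt e / w) by (unfold Rdiv; apply Rmult_le_pos; [nra | left; apply Rinv_0_lt_compat; lra]).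
assert (KE : E * Cq <= K) by (unfold K; nra).
destruct (Rlt_or_le (e * Rabs k) 1) as [hk|hk].
- pose proof (D_small S e k (proj1 hS) (proj1 he) hk) as HD. fold D in HD.
  assert (HD2 : D^2 <= 25 * (e^2 * k^2)).
  { rewrite <- (pow2_abs D). rewrite <- (pow2_abs k). pose proof (Rabs_pos D).
    replace (25 * (e^2 * Rabs k ^2)) with ((5 * (e * Rabs k))^2) by ring. 
    apply pow_incr. lra. }
  assert (hr : r * r = Rabs k) by (apply sqrt_sqrt, Rabs_pos).
  assert (hs : sqrt e * sqrt e = e) by (apply sqrt_sqrt; lra).
  assert (hsr : sqrt e * r <= 1).
  { destruct (Rle_or_lt (sqrt e * r) 1); auto.
    assert (1 < (sqrt e * r) * (sqrt e * r)) by nra.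
    replace ((sqrt e * r) * (sqrt e * r)) with (e * Rabs k) in H0 by (rewrite <- hr; transitivity (sqrt e * sqrt e * (r*r)); [rewrite hs; ring| ring]). lra. }
  assert (her : e^2 * r <= e * sqrt e).
  { assert (e^2*r = e*sqrt e*(sqrt e*r)) by (transitivity (e * (sqrt e * sqrt e) * r); [rewrite hs; ring | ring]).
    rewrite H. assert (0 <= e * sqrt e) by nra. nra. }
  assert (B1 : q k * F * W <= 25 * E * Cq * (2 * e^2 + e * sqrt e)).
  { eapply Rle_trans. apply Hq.
    assert (q k * (E * D^2) <= 25 * E * Cq * e^2).
    { apply Rle_trans with (q k * (E * (25 * (e^2 * k^2)))).
      apply Rmult_le_compat_l; auto. apply Rmult_le_compat_l; lra.
      replace (q k * (E * (25 * (e ^ 2 * k ^ 2)))) with (25 * E * e^2 * (q k * k^2)) by ring.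
      replace (25 * E * Cq * e ^ 2) with (25 * E * e^2 * Cq) by ring.
      apply Rmult_le_compat_l; auto. nra. }
    assert (0 <= q k * (E * D^2)) by (apply Rmult_le_pos; auto; apply Rmult_le_pos; [lra| apply pow2_ge_0]).
    apply Rle_trans with (25 * E * Cq * e^2 * (2 + r)). apply Rmult_le_compat_r; lra.
    assert (0 <= 25 * E * Cq) by nra. nra. }
  assert (hw2 : w <= 2).
  { unfold w. replace ((e*k)^2) with ((e * Rabs k)^2) by (transitivity (e^2 * Rabs k^2); [ring| rewrite pow2_abs; ring]).
    assert (0 <= e * Rabs k) by (pose proof (Rabs_pos k); nra). nra. }
  assert (I1 : 2 * e^2 <= 4 * e^2 / w).
  { unfold Rdiv. apply Rle_trans with (4 * e^2 * / 2). lra. apply Rmult_le_compat_l. nra. apply Rinv_le_contravar; lra. }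
  assert (I2 : e * sqrt e <= 2 * e * sqrt e / w).
  { unfold Rdiv. apply Rle_trans with (2 * e * sqrt e * / 2). lra. apply Rmult_le_compat_l. nra. apply Rinv_le_contravar; lra. }
  assert (25 * E * Cq * (2 * e^2 + e * sqrt e) <= E * Cq * (4 * e ^ 2 / w + 2 * e * sqrt e / w + P e k) * 25).
  { assert (0 <= E * Cq) by nra. nra. }
  assert (0 <= 4 * e ^ 2 / w + 2 * e * sqrt e / w + P e k) by lra.
  assert (E * Cq * 25 <= K) by (unfold K; nra). nra.
- assert (HD : D^2 <= 1).
  { pose proof (D_one S e k (proj1 hS)) as H1. fold D in H1. rewrite <- (pow2_abs D). pose proof (Rabs_pos D). nra. }
  assert (k2 : 0 < k^2).
  { rewrite <- (pow2_abs k). assert (0 < Rabs k) by (destruct (Req_dec (Rabs k) 0) as [h|h]; [rewrite h in hk; lra| pose proof (Rabs_pos k); lra]). nra. }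
  assert (hqk : q k <= Cq / k^2).
  { unfold Rdiv. apply Rmult_le_reg_r with (k^2); auto. rewrite Rmult_assoc, Rinv_l by lra. lra. }
  pose proof (L1 e k (proj1 he) hk) as HL1. pose proof (L2 e k (proj1 he) hk) as HL2. fold r w in HL1, HL2.
  assert (B : q k * F * W <= E * Cq * (2 / k^2 + r / k^2)).
  { eapply Rle_trans. apply Hq.
    apply Rle_trans with (q k * E * (2 + r)).
    - assert (0 <= q k * E) by nra.
      assert (q k * (E * D^2) <= q k * E) by nra. nra.
    - replace (E * Cq * (2 / k ^ 2 + r / k ^ 2)) with (E * (Cq / k^2) * (2 + r)) by (field; intro h; rewrite h in k2; simpl in k2; lra).
      assert (0 <= 2 + r) by lra. apply Rmult_le_compat_r; auto. rewrite (Rmult_comm (q k) E). apply Rmult_le_compat_l; lra. }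
  assert (0 <= E * Cq) by nra.
  assert (E * Cq * (2 / k^2 + r / k^2) <= E * Cq * (4 * e ^ 2 / w + 2 * e * sqrt e / w + P e k)).
  { apply Rmult_le_compat_l; auto. lra. }
  assert (0 <= 4 * e ^ 2 / w + 2 * e * sqrt e / w + P e k) by lra.
  nra.
Qed.
Definition H0 (e k : R) := -8*sqrt e/sqrt(sqrt(1+(e*k)^2)).
Definition P0 (e k : R) := 4*e^2*sqrt e*k/((1+(e*k)^2)*sqrt(sqrt(1+(e*k)^2))).
Lemma dH (e x : R) : is_derive (H0 e) x (P0 e x).
Proof.
unfold H0, P0.
assert (Hw : 0 < 1 + (e*x)^2) by nra.
assert (Hs1 : 0 < sqrt (1 + (e*x)^2)) by (apply sqrt_lt_R0; lra).
assert (Hs2 : 0 < sqrt (sqrt (1 + (e*x)^2))) by (apply sqrt_lt_R0; lra).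
auto_derive.
- replace (1 + e * x * (e * x * 1)) with (1 + (e*x)^2) by ring. repeat split; lra.
- replace (1 + e * x * (e * x * 1)) with (1 + (e*x)^2) by ring.
  set (w := 1 + (e*x)^2) in *. set (s1 := sqrt w) in *. set (s2 := sqrt s1) in *.
  assert (E2 : s2 * s2 = s1) by (apply sqrt_sqrt; lra).
  assert (E1 : s1 * s1 = w) by (apply sqrt_sqrt; lra).
  rewrite E2. rewrite <- E1. field. lra.
Qed.
Lemma contP0 (e x : R) : continuous (P0 e) x.
Proof.
apply (ex_derive_continuous (P0 e)). unfold P0.
assert (Hw : 0 < 1 + (e*x)^2) by nra.
assert (Hs1 : 0 < sqrt (1 + (e*x)^2)) by (apply sqrt_lt_R0; lra).
assert (Hs2 : 0 < sqrt (sqrt (1 + (e*x)^2))) by (apply sqrt_lt_R0; lra).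
auto_derive.
replace (1 + e * x * (e * x * 1)) with (1 + (e*x)^2) by ring. repeat split; try lra.
apply Rgt_not_eq. apply Rmult_lt_0_compat; lra.
Qed.
Lemma rint_atan (A e a b : R): 0<e -> is_RInt (fun k => A/(1+(e*k)^2)) a b (A/e*(atan(e*b) - atan(e*a))).
Proof.
intros he.
assert (H := is_RInt_derive (fun k => A/e*atan(e*k)) (fun k => A/(1+(e*k)^2)) a b).
replace (A/e*(atan(e*b) - atan(e*a))) with (minus (A/e*atan(e*b)) (A/e*atan(e*a))).
2:{ unfold minus, plus, opp; simpl. ring. }
apply H.
- intros x _. auto_derive. auto. field. repeat split; nra.
- intros x _. apply (ex_derive_continuous (fun k => A / (1 + (e*k)^2))). auto_derive. nra.
Qed.


Lemma H0_bound (e k : R) : -8*sqrt e <= H0 e k <= 0.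
Proof.
unfold H0.
assert (Hw : 1 <= 1 + (e*k)^2) by nra.
assert (Hs1 : 1 <= sqrt (1 + (e*k)^2)) by (apply Rle_trans with (sqrt 1); [rewrite sqrt_1; lra| apply sqrt_le_1_alt; lra]).
assert (Hs2 : 1 <= sqrt (sqrt (1 + (e*k)^2))) by (apply Rle_trans with (sqrt 1); [rewrite sqrt_1; lra| apply sqrt_le_1_alt; lra]).
assert (He : 0 <= sqrt e) by apply sqrt_pos.
set (s := sqrt (sqrt (1 + (e*k)^2))) in *.
split.
- unfold Rdiv.
  assert (/ s <= 1). { rewrite <- Rinv_1. apply Rinv_le_contravar; lra. }
  assert (0 < / s) by (apply Rinv_0_lt_compat; lra). nra.
- unfold Rdiv. assert (0 < / s) by (apply Rinv_0_lt_compat; lra). nra.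
Qed.

Lemma rint_P0 (e a b : R) : is_RInt (P0 e) a b (H0 e b - H0 e a).
Proof.
replace (H0 e b - H0 e a) with (minus (H0 e b) (H0 e a)) by (unfold minus, plus, opp; simpl; ring).
apply (is_RInt_derive (H0 e) (P0 e)); intros x _; [apply dH | apply contP0].
Qed.

Lemma rint_mP0 (e a b : R) : is_RInt (fun y => - P0 e y) a b (- (H0 e b - H0 e a)).
Proof. exact (@is_RInt_opp R_NormedModule (P0 e) a b _ (rint_P0 e a b)). Qed.

Lemma rint_P (e a b : R) : a <= b -> exists I, is_RInt (P e) a b I /\ I <= 16 * sqrt e.
Proof.
intros hab.
assert (Ppos : forall x, 0 <= x -> P0 e x = P e x).
{ intros x hx. unfold P, P0. rewrite Rabs_pos_eq; auto. }
assert (Pneg : forall x, x <= 0 -> - (P0 e x) = P e x).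
{ intros x hx. unfold P, P0. rewrite Rabs_left1; auto. unfold Rdiv; ring. }
assert (He : 0 <= sqrt e) by apply sqrt_pos.
destruct (Rle_or_lt 0 a) as [ha|ha].
- exists (H0 e b - H0 e a). split.
  + apply is_RInt_ext with (P0 e). 2: apply rint_P0.
    intros x hx. rewrite Rmin_left in hx; auto. apply Ppos. lra.
  + pose proof (H0_bound e a); pose proof (H0_bound e b); lra.
- destruct (Rle_or_lt b 0) as [hb|hb].
  + exists (- (H0 e b - H0 e a)). split.
    * apply is_RInt_ext with (fun y => - (P0 e y)).
      2: apply rint_mP0.
      intros x hx. rewrite Rmax_right in hx; auto. apply Pneg. lra.
    * pose proof (H0_bound e a); pose proof (H0_bound e b); lra.
  + exists (- (H0 e 0 - H0 e a) + (H0 e b - H0 e 0)). split.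
    * refine (@is_RInt_Chasles R_NormedModule (P e) a 0 b (- (H0 e 0 - H0 e a)) (H0 e b - H0 e 0) _ _).
      -- apply is_RInt_ext with (fun y => - (P0 e y)).
         2: apply rint_mP0.
         intros x hx. rewrite Rmax_right in hx; try lra. apply Pneg. lra.
      -- apply is_RInt_ext with (P0 e). 2: apply rint_P0.
         intros x hx. rewrite Rmin_left in hx; try lra. apply Ppos. lra.
    * pose proof (H0_bound e a); pose proof (H0_bound e b); pose proof (H0_bound e 0); lra.
Qed.


Lemma atan_diff (x y : R) : atan y - atan x <= PI.
Proof. pose proof (atan_bound x); pose proof (atan_bound y); lra. Qed.

Lemma rint_U (e K a b : R) : 0 < e <= 1 -> 0 <= K -> a <= b ->
  exists I, is_RInt (U e K) a b I /\ I <= 40 * K * sqrt e.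
Proof.
intros he hK hab.
destruct (rint_P e a b hab) as [I3 [H3 B3]].
pose proof (rint_atan (4*e^2) e a b (proj1 he)) as H1.
pose proof (rint_atan (2*e*sqrt e) e a b (proj1 he)) as H2.
pose proof (@is_RInt_plus R_NormedModule _ _ a b _ _ H1 H2) as HS.
pose proof (@is_RInt_plus R_NormedModule _ _ a b _ _ HS H3) as HS2.
pose proof (@is_RInt_scal R_NormedModule _ a b K _ HS2) as HS3.
exists (K * ((4*e^2/e*(atan(e*b) - atan(e*a)) + 2*e*sqrt e/e*(atan(e*b) - atan(e*a))) + I3)).
split.
- eapply is_RInt_ext. 2: exact HS3.
  intros x _. unfold U. reflexivity.
-
  assert (se1 : sqrt e <= 1) by (rewrite <- sqrt_1; apply sqrt_le_1_alt; lra).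
  assert (se0 : 0 <= sqrt e) by apply sqrt_pos.
  assert (ese : e <= sqrt e). { pose proof (sqrt_sqrt e (Rlt_le _ _ (proj1 he))). nra. }
  pose proof (atan_diff (e*a) (e*b)) as Ad.
  assert (Ad0 : 0 <= atan (e*b) - atan (e*a)).
  { destruct (Req_dec a b) as [->|hne]; [lra|]. pose proof (atan_increasing (e*a) (e*b)). nra. }
  replace (4 * e ^ 2 / e) with (4*e) by (field; lra).
  replace (2 * e * sqrt e / e) with (2*sqrt e) by (field; lra).
  pose proof PI_4. apply Rmult_le_compat_l with (r := K) in B3; auto.
  assert (0 <= K * (4*e*(atan (e*b) - atan (e*a)))) by (apply Rmult_le_pos; nra).
  assert (K*(4 * e * (atan (e * b) - atan (e * a))) <= K*(16*sqrt e)).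
  { apply Rmult_le_compat_l; auto. nra. }
  assert (K*(2 * sqrt e * (atan (e * b) - atan (e * a))) <= K*(8*sqrt e)).
  { apply Rmult_le_compat_l; auto. nra. }
  nra.
Qed.

Theorem mainTheorem15 (nu T gamma Cq : R) (q : R -> R)
  (hnu : Rabs nu <= 1) (hT : 0 < T) (hgamma : 0 <= gamma < / 4)
  (hq_nonneg : forall k, 0 <= q k)
  (hq_bound : forall k, q k <= Cq /\ q k * k ^ 2 <= Cq) :
  exists C : R, 0 < C /\
    forall eps : R, 0 < eps <= 1 ->
    forall S : R, 0 <= S <= T ->
      integral_R_le
        (fun k => q k * (f_fn nu eps S k) ^ 2 * (rpow (Rabs k) (2 * gamma) + 1))
        (C * (eps ^ 2 + sqrt eps)).
Proof.
assert (Cq0 : 0 <= Cq) by (pose proof (hq_nonneg 0); pose proof (hq_bound 0); lra).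
set (K := 25 * exp (2*T) * (Cq + 1)).
assert (hK : 0 < K) by (unfold K; pose proof (exp_pos (2*T)); nra).
exists (40 * K). split; [lra|].
intros e he S hS a b hab delta hd.
destruct (rint_U e K a b he (Rlt_le _ _ hK) hab) as [I [HI BI]].
assert (pr : Riemann_integrable (U e K) a b) by (apply ex_RInt_Reals_0; exists I; exact HI).
assert (HR : RiemannInt pr <= 40 * K * (e^2 + sqrt e)).
{ rewrite <- RInt_Reals. rewrite (is_RInt_unique _ _ _ _ HI).
  assert (0 <= e^2) by nra. nra. }
destruct (upper_step (U e K) a b _ pr hab HR delta hd) as [phi [H1 H2]].
exists phi. split; auto.
intros x hx. eapply Rle_trans; [|apply H1; exact hx].
apply pointwise; auto.
Qed.
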